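(* Assume that the basis of canonical cycles $(b_1,b_2,a_1,a_2)$ satisfying $a_1^{\mu}=a_2$, $b_1^{\mu}=b_2$ is transformed by a matrix $T\in \mathrm{Sp}(4,\mathbb{Z})$ to another basis $(b'_1,b'_2,a'_1,a'_2)$ satisfying the same relation: $a_1'^{\mu}=a_2'$, $b_1'^{\mu}=b_2'$. Then the action of the matrix $T$ on the matrix of $b$-periods $\mathbf{B}=\frac{1}{2}\begin{pmatrix}\mathbf{x}+\mathbf{y} & \mathbf{x}-\mathbf{y}\\ \mathbf{x}-\mathbf{y} & \mathbf{x}+\mathbf{y}\end{pmatrix}$ gives rise to an action of two elements $\gamma_1,\gamma_2\in\Gamma$, such that $\gamma_1\gamma_2^{-1}\in\Gamma(2)$, on $\mathbf{x}$ and $\mathbf{y}$, respectively. The matrix $T$ is expressed in terms of $\gamma_{1,2}$ as follows: if $\gamma_i=\begin{pmatrix} k_i & l_i\\ m_i & n_i\end{pmatrix}$, $i=1,2$, then $$T=\frac{1}{2}\begin{pmatrix} k_1+k_2 & k_1-k_2 & l_1+l_2 & l_1-l_2\\ k_1-k_2 & k_1+k_2 & l_1-l_2 & l_1+l_2\\ m_1+m_2 & m_1-m_2 & n_1+n_2 & n_1-n_2\\ m_1-m_2 & m_1+m_2 & n_1-n_2 & n_1+n_2\end{pmatrix}.$$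
   Context: Consider a genus two curve $y^2=(z^2-1)(z^2-r_1^2)(z^2-r_2^2)$, $r_1,r_2\in\mathbb{C}$, which besides the hyperelliptic involution admits the involution $\mu: z\mapsto -z$. A canonical basis of cycles $(b_1,b_2,a_1,a_2)$ is chosen so that $a_1^{\mu}=a_2$, $b_1^{\mu}=b_2$ (superscript $\mu$ denotes the image of a cycle under $\mu$); in such a basis the matrix of $b$-periods has the form $\mathbf{B}=\frac{1}{2}\begin{pmatrix}\mathbf{x}+\mathbf{y} & \mathbf{x}-\mathbf{y}\\ \mathbf{x}-\mathbf{y} & \mathbf{x}+\mathbf{y}\end{pmatrix}$ with $\mathbf{x},\mathbf{y}$ in the upper half-plane. A matrix $T=\begin{pmatrix}A&B\\C&D\end{pmatrix}\in\mathrm{Sp}(4,\mathbb{Z})$ acting on the vector $(b_1,b_2,a_1,a_2)^t$ acts on the matrix of $b$-periods by $\mathbf{B}\mapsto (A\mathbf{B}+B)(C\mathbf{B}+D)^{-1}$; elements of $\Gamma$ act on the upper half-plane by Möbius transformations. Here $\Gamma=SL(2,\mathbb{Z})$ and $\Gamma(2)$ is the principal congruence subgroup of $\Gamma$ consisting of matrices $\gamma\equiv I \pmod 2$. *)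

(* Defs.v *)
From mathcomp Require Import all_boot all_algebra.
From mathcomp Require Import reals.
From mathcomp Require Export complex.
Set Implicit Arguments. Unset Strict Implicit. Unset Printing Implicit Defensive.
Import GRing.Theory Num.Theory.
Local Open Scope ring_scope.

(* Homology H_1 of the genus-2 curve with integer coefficients, written in
   coordinates w.r.t. the canonical basis (b1,b2,a1,a2): index 0 = b1,
   1 = b2, 2 = a1, 3 = a2. *)
Definition cycle := 'rV[int]_(2 + 2).

(* Matrix of the action of the involution mu on H_1 in the basis
   (b1,b2,a1,a2): since a1^mu = a2, a2^mu = a1, b1^mu = b2, b2^mu = b1,
   mu swaps coordinates 0<->1 and 2<->3. *)
Definition mu_mx : 'M[int]_(2 + 2) :=
  \matrix_(i, j) (if (j : nat) == (if (i : nat) == 0%N then 1%N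
                                   else if (i : nat) == 1%N then 0%N
                                   else if (i : nat) == 2%N then 3%N
                                   else 2%N) then 1 else 0).

Definition mu_cyc (c : cycle) : cycle := c *m mu_mx.

Definition ent (T : 'M[int]_(2 + 2)) (i j : nat) : int := T (inord i) (inord j).

(* the k-th new cycle (b'_1,b'_2,a'_1,a'_2) when the column vector
   (b1,b2,a1,a2)^t is transformed by T: it is the k-th row of T *)
Definition new_cycle (T : 'M[int]_(2 + 2)) (k : nat) : cycle := row (inord k) T.

Definition Jmx : 'M[int]_(2 + 2) := block_mx 0 1%:M (- 1%:M) 0.
Definition symplectic (T : 'M[int]_(2 + 2)) : Prop := T *m Jmx *m T^T = Jmx.

Definition SL2Z (g : 'M[int]_2) : Prop := \det g = 1.
Definition Gamma2 (g : 'M[int]_2) : Prop :=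
  SL2Z g /\ forall i j : 'I_2, (2 %| g i j - (i == j)%:R)%Z.

Definition upper_half (R : realType) (z : R[i]) : Prop := 0 < complex.Im z.

Definition mobius (R : realType) (g : 'M[int]_2) (z : R[i]) : R[i] :=
  ((g 0 0)%:~R * z + (g 0 1)%:~R) / ((g 1 0)%:~R * z + (g 1 1)%:~R).

Definition per_mx (R : realType) (x y : R[i]) : 'M[R[i]]_2 :=
  \matrix_(i, j) (if i == j then (x + y) / 2 else (x - y) / 2).

Definition sp_act (R : realType) (T : 'M[int]_(2 + 2)) (Bm : 'M[R[i]]_2)
  : 'M[R[i]]_2 :=
  let T' := map_mx (fun z : int => z%:~R : R[i]) T in
  (ulsubmx T' *m Bm + ursubmx T') *m invmx (dlsubmx T' *m Bm + drsubmx T').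

(* Main.v *)
Require Import Defs.
From mathcomp Require Import all_boot all_algebra.
From mathcomp Require Import reals.
From mathcomp Require Import complex.
From mathcomp Require Import ring lra.
Import GRing.Theory Num.Theory.
Local Open Scope ring_scope.
Require Import Defs.
From mathcomp Require Import all_boot all_algebra.
From mathcomp Require Import reals.
From mathcomp Require Import complex.
From mathcomp Require Import ring lra.
Import GRing.Theory Num.Theory.
Local Open Scope ring_scope.
Arguments ent : simpl never.

Definition Jv (i j : nat) : int :=
  if (i < 2)%N then (if j == (i+2)%N then 1 else 0) else (if i == (j+2)%N then -1 else 0).

Lemma JmxE (i j : 'I_(2+2)) : Jmx i j = Jv i j.
Proof.
rewrite /Jmx /Jv.
case: (split_ordP i) => i' ->; case: (split_ordP j) => j' ->;
  rewrite ?block_mxEul ?block_mxEur ?block_mxEdl ?block_mxEdr !mxE /=;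
  by case: i' j' => [[|[|?]] ?] [[|[|?]] ?].
Qed.

Lemma entE (T : 'M[int]_(2+2)) (i j : 'I_(2+2)) : T i j = ent T i j.
Proof. by rewrite /ent !inord_val. Qed.

Lemma sympl_rel (T : 'M[int]_(2+2)) (p q : nat) : (p < 4)%N -> (q < 4)%N ->
  symplectic T ->
  (T *m Jmx *m T^T) (inord p) (inord q) = Jv p q.
Proof.
move=> hp hq /matrixP H; rewrite H JmxE !inordK //.
Qed.

Lemma sympl_rel2 (T : 'M[int]_(2+2)) (p q : nat) : (p < 4)%N -> (q < 4)%N ->
  (T *m Jmx *m T^T) (inord p) (inord q) =
  - ent T p 2 * ent T q 0 - ent T p 3 * ent T q 1 + ent T p 0 * ent T q 2 + ent T p 1 * ent T q 3.
Proof.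
move=> hp hq; rewrite !mxE !big_ord_recl !big_ord0 /=.
rewrite !mxE !big_ord_recl !big_ord0 !JmxE /= !entE /= !inordK // /bump /= /Jv /=.
rewrite ?addn0 ?add1n. ring.
Qed.
Lemma mu_rel (T : 'M[int]_(2 + 2)) (p q : nat) : (p < 4)%N ->
  mu_cyc (new_cycle T p) = new_cycle T q ->
  [/\ ent T q 0 = ent T p 1, ent T q 1 = ent T p 0,
      ent T q 2 = ent T p 3 & ent T q 3 = ent T p 2].
Proof.
move=> hp /matrixP H.
have F j : ent T q j = (mu_cyc (new_cycle T p)) 0 (inord j) by rewrite H mxE.
rewrite !F /mu_cyc /new_cycle !mxE !big_ord_recl !big_ord0 !mxE /=.
rewrite !inordK //= !entE /= !inordK // /bump /=.
rewrite !mulr0 !mulr1 !add0r !addr0. by [].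
Qed.

Arguments addn : simpl nomatch.
Arguments modn : simpl nomatch.

Definition mk2 (p q r s : int) : 'M[int]_2 :=
  \matrix_(i, j) (if i == 0 then (if j == 0 then p else q) else (if j == 0 then r else s)).

Lemma mk2E p q r s : [/\ mk2 p q r s 0 0 = p, mk2 p q r s 0 1 = q,
   mk2 p q r s 1 0 = r & mk2 p q r s 1 1 = s].
Proof. by rewrite !mxE. Qed.

Lemma det2 (R : comNzRingType) (A : 'M[R]_2) : \det A = A 0 0 * A 1 1 - A 0 1 * A 1 0.
Proof.
rewrite (expand_det_row _ 0) !big_ord_recl big_ord0 /cofactor !det_mx11 !mxE /=.
have -> : lift (0 : 'I_2) (0 : 'I_1) = 1 by apply/val_inj.
idtac.
idtac.
idtac.
have -> : lift (1 : 'I_2) (0 : 'I_1) = 0 by apply/val_inj.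
rewrite /bump /= expr0 expr1 mul1r addr0 mulN1r mulrN.
by [].
Qed.

Lemma den_neq0 (R : realType) (k l m n : int) (x : R[i]) :
  k * n - l * m = 1 -> upper_half x -> m%:~R * x + n%:~R != 0.
Proof.
move=> hd hx; apply/eqP => H.
have : complex.Im (m%:~R * x + n%:~R) = 0 by rewrite H.
rewrite raddfD /= mulrzl !raddfMz /= mul0rz addr0 => /eqP.
rewrite mulrz_eq0 (negbTE (lt0r_neq0 hx)) orbF => /eqP m0.
move: H hd; rewrite m0 mul0r add0r mulr0 subr0 => /eqP; rewrite intr_eq0 => /eqP ->.
by rewrite mulr0.
Qed.

Definition tv (a b c d e f g h : int) (i j : nat) : int :=
  nth 0 (nth [::] [:: [:: a; b; c; d]; [:: b; a; d; c]; [:: e; f; g; h]; [:: f; e; h; g]] i) j.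

Lemma m12 : (1 %% 2 = 1)%N. Proof. by []. Qed.

Ltac simp hT := rewrite ?mxE ?big_ord_recl ?big_ord0 ?mxE ?hT /= /bump /= ?m12 /tv /=.

Lemma act_core (R : realType) (T : 'M[int]_(2+2)) (a b c d e f g h : int) (x y : R[i]) :
  (forall i j : 'I_(2+2), T i j = tv a b c d e f g h i j) ->
  (a+b)*(g+h) - (c+d)*(e+f) = 1 -> (a-b)*(g-h) - (c-d)*(e-f) = 1 ->
  upper_half x -> upper_half y ->
  sp_act T (per_mx x y) = per_mx (mobius (mk2 (a+b) (c+d) (e+f) (g+h)) x)
                                 (mobius (mk2 (a-b) (c-d) (e-f) (g-h)) y).
Proof.
move=> hT d1 d2 hx hy.
have u0 := @den_neq0 R _ _ _ _ _ d1 hx; have v0 := @den_neq0 R _ _ _ _ _ d2 hy.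
rewrite /sp_act /mobius.
have [-> -> -> ->] := mk2E (a+b) (c+d) (e+f) (g+h).
have [-> -> -> ->] := mk2E (a-b) (c-d) (e-f) (g-h).
set M := (dlsubmx _ *m _ + _).
have Mu : M \in unitmx.
  rewrite unitmxE unitfE det2; simp hT.
  have E (z : R[i]) : z = ((e + f)%:~R * x + (g + h)%:~R) * ((e - f)%:~R * y + (g - h)%:~R) -> z != 0.
    by move=> ->; rewrite mulf_neq0.
  by apply: E; field.
apply: (canLR (mulmxK Mu)).
apply/matrixP => i j.
case: i j => [[|[|?]] ?] [[|[|?]] ?] //; simp hT; simp hT; field;
  by move: u0 v0; rewrite ?rmorphB ?rmorphD /= => -> ->.
Qed.

Theorem lemma1 (R : realType) (T : 'M[int]_(2 + 2)) :
  symplectic T ->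
  mu_cyc (new_cycle T 2) = new_cycle T 3 ->
  mu_cyc (new_cycle T 0) = new_cycle T 1 ->
  exists g1 g2 : 'M[int]_2,
    [/\ SL2Z g1, SL2Z g2, Gamma2 (g1 *m invmx g2),
        (forall x y : R[i], upper_half x -> upper_half y ->
           sp_act T (per_mx x y) = per_mx (mobius g1 x) (mobius g2 y)) &
        (let k1 := g1 0 0 in let l1 := g1 0 1 in
         let m1 := g1 1 0 in let n1 := g1 1 1 in
         let k2 := g2 0 0 in let l2 := g2 0 1 in
         let m2 := g2 1 0 in let n2 := g2 1 1 in
         [/\ [/\ 2 * ent T 0 0 = k1 + k2, 2 * ent T 0 1 = k1 - k2,
                 2 * ent T 0 2 = l1 + l2 & 2 * ent T 0 3 = l1 - l2],
             [/\ 2 * ent T 1 0 = k1 - k2, 2 * ent T 1 1 = k1 + k2,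
                 2 * ent T 1 2 = l1 - l2 & 2 * ent T 1 3 = l1 + l2],
             [/\ 2 * ent T 2 0 = m1 + m2, 2 * ent T 2 1 = m1 - m2,
                 2 * ent T 2 2 = n1 + n2 & 2 * ent T 2 3 = n1 - n2] &
             [/\ 2 * ent T 3 0 = m1 - m2, 2 * ent T 3 1 = m1 + m2,
                 2 * ent T 3 2 = n1 - n2 & 2 * ent T 3 3 = n1 + n2]])].

Proof.
move=> HS H2 H0.
have [r10 r11 r12 r13] := mu_rel T 0 1 isT H0.
have [r30 r31 r32 r33] := mu_rel T 2 3 isT H2.
have e02 := sympl_rel T 0 2 isT isT HS.
rewrite sympl_rel2 // /Jv /= in e02.
have e03 := sympl_rel T 0 3 isT isT HS.
rewrite sympl_rel2 // /Jv /= r30 r31 r32 r33 in e03.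
set a := ent T 0 0 in e02 e03 r11 r13 *; set b := ent T 0 1 in e02 e03 r10 r12 *.
set c := ent T 0 2 in e02 e03 r10 r12 *; set d := ent T 0 3 in e02 e03 r10 r12 *.
set e := ent T 2 0 in e02 e03 r31 *; set f := ent T 2 1 in e02 e03 r30 *.
set g := ent T 2 2 in e02 e03 r33 *; set h := ent T 2 3 in e02 e03 r32 *.
have d1 : (a+b)*(g+h) - (c+d)*(e+f) = 1.
  by rewrite -[RHS]addr0 -{1}e02 -e03; ring.
have d2 : (a-b)*(g-h) - (c-d)*(e-f) = 1.
  by rewrite -[RHS]subr0 -{1}e02 -e03; ring.
have hT : forall i j : 'I_(2+2), T i j = tv a b c d e f g h i j.
  move=> i j; rewrite entE.
  case: i j => [[|[|[|[|?]]]] ?] [[|[|[|[|?]]]] ?] //=.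
exists (mk2 (a+b) (c+d) (e+f) (g+h)), (mk2 (a-b) (c-d) (e-f) (g-h)).
have [E00 E01 E10 E11] := mk2E (a+b) (c+d) (e+f) (g+h).
have [F00 F01 F10 F11] := mk2E (a-b) (c-d) (e-f) (g-h).
have U2 : mk2 (a-b) (c-d) (e-f) (g-h) \in unitmx.
  by rewrite unitmxE det2 F00 F01 F10 F11 d2 unitr1.
split.
- by rewrite /SL2Z det2 E00 E01 E10 E11.
- by rewrite /SL2Z det2 F00 F01 F10 F11.
- split.
    by rewrite /SL2Z det_mulmx det_inv !det2 E00 E01 E10 E11 F00 F01 F10 F11 d1 d2 invr1 mulr1.
  move=> i j.
  have -> : mk2 (a+b) (c+d) (e+f) (g+h) = mk2 (a-b) (c-d) (e-f) (g-h) + 2 *: mk2 b d f h.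
    apply/matrixP => p q; rewrite !mxE.
    case: p q => [[|[|?]] ?] [[|[|?]] ?] //=; ring.
  rewrite mulmxDl mulmxV // -scalemxAl.
  rewrite [X in (_ %| X)%Z](_ : _ = 2 * (mk2 b d f h *m invmx (mk2 (a-b) (c-d) (e-f) (g-h))) i j).
    by apply: dvdz_mulr; apply: dvdzz.
  by rewrite !mxE; ring.
- by move=> x y hx hy; apply: act_core.
rewrite /= E00 E01 E10 E11 F00 F01 F10 F11 r10 r11 r12 r13 r30 r31 r32 r33 -/c.
by split; split; ring.
Qed.
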